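(* Let $f:\{0,1\}^n\to\{-1,1\}$ and $J\subseteq[n]$. Then $$\mathrm{SymInf}_f(J)=\tfrac12\sum_{S\subseteq[n]}\mathop{\mathbf{Var}}_{\pi\in\mathcal{S}_J}\big[\widehat f(\pi S)\big],$$ where $\pi$ is uniform in $\mathcal{S}_J$ and $\pi S=\{\pi(i):i\in S\}$.
   Context: $\mathcal{S}_J$ is the set of permutations of $[n]$ fixing every element outside $J$. For $x\in\{0,1\}^n$ and a permutation $\pi$, $\pi x$ is the vector whose $\pi(i)$-th coordinate is $x_i$. The symmetric influence of $J$ is $\mathrm{SymInf}_f(J)=\Pr_{x,\pi}[f(x)\ne f(\pi x)]$ with $x$ uniform in $\{0,1\}^n$ and $\pi$ uniform in $\mathcal{S}_J$. For $S\subseteq[n]$, $\chi_S(x)=(-1)^{\sum_{i\in S}x_i}$ and $\widehat f(S)=\mathbf{E}_x[f(x)\chi_S(x)]$ is the Fourier coefficient. *)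

(* Defs.v *)
From mathcomp Require Import all_boot all_order all_algebra all_fingroup.
Set Implicit Arguments. Unset Strict Implicit. Unset Printing Implicit Defensive.
Import Order.TTheory GRing.Theory Num.Theory.
Local Open Scope ring_scope.

Definition cube (n : nat) := {ffun 'I_n -> bool}.

Definition SJ (n : nat) (J : {set 'I_n}) : {set {perm 'I_n}} :=
  [set s : {perm 'I_n} | [forall i, (i \notin J) ==> (s i == i)]].

(* pi x : the vector whose pi(i)-th coordinate is x_i. *)
Definition permx (n : nat) (pi : {perm 'I_n}) (x : cube n) : cube n :=
  [ffun j => x ((pi^-1)%g j)].

Definition SymInf (R : realFieldType) (n : nat) (f : cube n -> R) (J : {set 'I_n}) : R :=
  (\sum_(x : cube n) \sum_(pi in SJ J) ((f x != f (permx pi x)) : nat)%:R)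
  / ((2 ^ n)%:R * #|SJ J|%:R).

Definition chi (R : realFieldType) (n : nat) (S : {set 'I_n}) (x : cube n) : R :=
  (-1) ^+ (\sum_(i in S) (x i : nat))%N.

Definition fhat (R : realFieldType) (n : nat) (f : cube n -> R) (S : {set 'I_n}) : R :=
  (\sum_(x : cube n) f x * chi R S x) / (2 ^ n)%:R.

Definition Epi (R : realFieldType) (n : nat) (A : {set {perm 'I_n}}) (g : {perm 'I_n} -> R) : R :=
  (\sum_(pi in A) g pi) / #|A|%:R.

Definition Varpi (R : realFieldType) (n : nat) (A : {set {perm 'I_n}}) (g : {perm 'I_n} -> R) : R :=
  Epi A (fun pi => (g pi - Epi A g) ^+ 2).

(* Main.v *)
Require Import Defs.
From mathcomp Require Import all_boot all_order all_algebra all_fingroup ring lra.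
Import Order.TTheory GRing.Theory Num.Theory.
Local Open Scope ring_scope.

Lemma card_setsT (T : finType) : #|{set T}| = (2 ^ #|T|)%N.
Proof.
rewrite -[#|T|]cardsT -(card_powerset [set: T]).
rewrite -cardsT; apply: eq_card => A; by rewrite !inE subsetT.
Qed.

Lemma chi_setU1 (R : realFieldType) n (T : {set 'I_n}) i (x : cube n) :
  i \notin T -> chi R (i |: T) x = (-1) ^+ (x i : nat) * chi R T x.
Proof. by move=> iT; rewrite /chi big_setU1 //= exprD. Qed.

Lemma chi_sq (R : realFieldType) n (S : {set 'I_n}) (x : cube n) :
  chi R S x * chi R S x = 1.
Proof. by rewrite -expr2 sqrr_sign. Qed.

Lemma chi_orth (R : realFieldType) n (x y : cube n) :
  \sum_(S : {set 'I_n}) chi R S x * chi R S y = if x == y then (2 ^ n)%:R else 0.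
Proof.
case: eqP => [<-|/eqP nxy].
  under eq_bigr do rewrite chi_sq.
  by rewrite sumr_const card_setsT card_ord.
have [i xyi] : exists i, x i != y i.
  apply/existsP; apply: contraNT nxy; rewrite negb_exists => /forallP H.
  by apply/eqP/ffunP => i; move: (H i); rewrite negbK => /eqP.
pose t (S : {set 'I_n}) := if i \in S then S :\ i else i |: S.
have tK : involutive t.
  move=> S; rewrite /t; case: (boolP (i \in S)) => iS.
    by rewrite !inE eqxx /= setD1K.
  by rewrite !inE eqxx /= setU1K.
pose h (S : {set 'I_n}) := chi R S x * chi R S y.
have sgn : (-1) ^+ (x i : nat) * (-1) ^+ (y i : nat) = - 1 :> R.
  by move: xyi; case: (x i); case: (y i) => //= _; rewrite ?expr1 ?expr0 ?mulr1 ?mul1r.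
have ht : forall S : {set 'I_n}, i \notin S -> h (i |: S) = - h S.
  move=> S iS; rewrite /h !chi_setU1 //.
  by rewrite mulrACA sgn mulN1r.
have htS : forall S : {set 'I_n}, h (t S) = - h S.
  move=> S; rewrite /t; case: (boolP (i \in S)) => iS.
    by rewrite -{2}(setD1K iS) ht ?opprK // !inE eqxx.
  by rewrite ht.
have E : \sum_(S : {set 'I_n}) h S = \sum_(S : {set 'I_n}) h (t S) by rewrite (reindex_inj (inv_inj tK)).
rewrite -/h.
move: E; under [X in _ = X -> _]eq_bigr do rewrite htS.
rewrite sumrN => E; lra.
Qed.

Lemma permxM n (s t : {perm 'I_n}) (x : cube n) :
  permx s (permx t x) = permx (t * s)%g x.
Proof. by apply/ffunP => j; rewrite !ffunE invMg permM. Qed.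

Lemma permx1 n (x : cube n) : permx 1%g x = x.
Proof. by apply/ffunP => j; rewrite !ffunE invg1 perm1. Qed.

Lemma permxK n (s : {perm 'I_n}) : cancel (permx s) (permx s^-1%g).
Proof. by move=> x; rewrite permxM mulgV permx1. Qed.

Lemma chi_perm (R : realFieldType) n (pi : {perm 'I_n}) (S : {set 'I_n}) (y : cube n) :
  chi R (pi @: S) (permx pi y) = chi R S y.
Proof.
rewrite /chi big_imset /=; last by move=> a b _ _; apply: perm_inj.
by congr (_ ^+ _); apply: eq_bigr => i _; rewrite ffunE permK.
Qed.

Lemma fhat_perm (R : realFieldType) n (f : cube n -> R) (pi : {perm 'I_n}) (S : {set 'I_n}) :
  fhat f (pi @: S) = fhat (fun y => f (permx pi y)) S.
Proof.
rewrite /fhat (reindex_inj (can_inj (permxK _ pi))) /=.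
by congr (_ / _); apply: eq_bigr => y _; rewrite chi_perm.
Qed.

Lemma plancherel (R : realFieldType) n (g h : cube n -> R) :
  \sum_(S : {set 'I_n}) fhat g S * fhat h S = (\sum_x g x * h x) / (2 ^ n)%:R.
Proof.
have N0 : (2 ^ n)%:R != 0 :> R by rewrite pnatr_eq0 expn_eq0.
rewrite /fhat.
under eq_bigr do rewrite mulrACA -invfM big_distrlr mulr_suml.
under eq_bigr do under eq_bigr do rewrite mulr_suml.
rewrite exchange_big /=.
under eq_bigr do rewrite exchange_big /=.
rewrite mulr_suml; apply: eq_bigr => x _.
have -> : g x * h x / (2 ^ n)%:R = \sum_y g x * h y * (\sum_(S : {set 'I_n}) chi R S x * chi R S y) / ((2 ^ n)%:R * (2 ^ n)%:R).
  symmetry; under eq_bigr => y _ do rewrite chi_orth.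
  rewrite (bigD1 x) //= big1 ?addr0; last first.
    by move=> y yx; rewrite eq_sym (negbTE yx) mulr0 mul0r.
  by rewrite eqxx invfM mulrA mulfK.
apply: eq_bigr => y _.
rewrite mulr_sumr mulr_suml; apply: eq_bigr => S _.
by rewrite mulrACA.
Qed.

Lemma SJ1 n (J : {set 'I_n}) : 1%g \in SJ J.
Proof. by rewrite inE; apply/forallP => i; rewrite perm1 eqxx implybT. Qed.

Lemma SJM n (J : {set 'I_n}) s t : s \in SJ J -> t \in SJ J -> (s * t)%g \in SJ J.
Proof.
rewrite !inE => /forallP Hs /forallP Ht; apply/forallP => i; apply/implyP => iJ.
by rewrite permM (eqP (implyP (Hs i) iJ)) (eqP (implyP (Ht i) iJ)).
Qed.

Lemma SJV n (J : {set 'I_n}) s : s \in SJ J -> s^-1%g \in SJ J.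
Proof.
rewrite !inE => /forallP Hs; apply/forallP => i; apply/implyP => iJ.
have e : s i = i := eqP (implyP (Hs i) iJ).
by rewrite -{1}e permK.
Qed.

Lemma sum_SJ_shift (R : realFieldType) n (J : {set 'I_n}) (F : {perm 'I_n} -> R) pi :
  pi \in SJ J -> \sum_(s in SJ J) F (pi^-1 * s)%g = \sum_(t in SJ J) F t.
Proof.
move=> piJ; rewrite (reindex_inj (mulgI pi)) /=.
apply: eq_big => [t|t _]; last by rewrite mulKg.
apply/idP/idP => H; last exact: SJM.
by rewrite -(mulKg pi t); apply: SJM => //; apply: SJV.
Qed.

Lemma varpiE (R : realFieldType) n (A : {set {perm 'I_n}}) (g : {perm 'I_n} -> R) :
  #|A| != 0%N ->
  Varpi A g = (\sum_(pi in A) g pi ^+ 2) / #|A|%:R - (\sum_(pi in A) g pi) ^+ 2 / (#|A|%:R ^+ 2).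
Proof.
move=> A0; have M0 : #|A|%:R != 0 :> R by rewrite pnatr_eq0.
rewrite /Varpi /Epi; set E := (\sum_(pi in A) g pi) / #|A|%:R.
under eq_bigr do rewrite sqrrB.
rewrite !big_split /= sumrN sumr_const sumrMnl -mulr_suml.
rewrite /E; field; exact: M0.
Qed.

Lemma pairS (R : realFieldType) n (f : cube n -> R) (pi sg : {perm 'I_n}) :
  \sum_(S : {set 'I_n}) fhat f (pi @: S) * fhat f (sg @: S)
  = (\sum_x f (permx pi x) * f (permx sg x)) / (2 ^ n)%:R.
Proof.
under eq_bigr do rewrite !fhat_perm.
exact: plancherel.
Qed.

Lemma Gshift (R : realFieldType) n (f : cube n -> R) (pi sg : {perm 'I_n}) :
  \sum_x f (permx pi x) * f (permx sg x) = \sum_x f x * f (permx (pi^-1 * sg)%g x).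
Proof.
rewrite (reindex_inj (can_inj (permxK _ pi^-1%g))) /=.
by apply: eq_bigr => y _; rewrite !permxM mulVg permx1.
Qed.

Lemma ind_pm (R : realFieldType) (a b : R) : (a = 1 \/ a = -1) -> (b = 1 \/ b = -1) ->
  ((a != b) : nat)%:R = (1 - a * b) / 2.
Proof.
have h1 : (1 : R) != -1 by apply/eqP => H; lra.
have h2 : (-1 : R) != 1 by rewrite eq_sym.
move=> [->|->] [->|->]; rewrite ?eqxx ?(negbTE h1) ?(negbTE h2) /=; by field.
Qed.

Theorem proposition2 (R : realFieldType) (n : nat) (f : cube n -> R)
  (hf : forall x, f x = 1 \/ f x = -1) (J : {set 'I_n}) :
  SymInf f J =
  2^-1 * \sum_(S : {set 'I_n}) Varpi (SJ J) (fun pi => fhat f (pi @: S)).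
Proof.
have N0 : (2 ^ n)%:R != 0 :> R by rewrite pnatr_eq0 expn_eq0.
have MJ : #|SJ J| != 0%N.
  by rewrite -lt0n card_gt0; apply/set0Pn; exists 1%g; exact: SJ1.
have M0 : #|SJ J|%:R != 0 :> R by rewrite pnatr_eq0.
have ff : forall y, f y * f y = 1 by move=> y; case: (hf y) => ->; rewrite ?mulrNN mulr1.
pose Af (t : {perm 'I_n}) := \sum_x f x * f (permx t x).
have L : SymInf f J = (#|SJ J|%:R * (2^n)%:R - \sum_(t in SJ J) Af t) / (2 * ((2^n)%:R * #|SJ J|%:R)).
  rewrite /SymInf exchange_big /=.
  under eq_bigr => pi _ do under eq_bigr => x _ do rewrite (ind_pm _ _ _ (hf x) (hf (permx pi x))).
  under eq_bigr => pi _ do rewrite -mulr_suml sumrB sumr_const.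
  rewrite -mulr_suml sumrB sumr_const.
  rewrite [X in X%:R *+ _]card_ffun card_bool card_ord -mulr_natr.
  by rewrite /Af; field; rewrite N0 M0.
have cc : forall c : R, \sum_(x : cube n) c = c * (2 ^ n)%:R.
  by move=> c; rewrite sumr_const card_ffun card_bool card_ord mulr_natr.
have Q1 : \sum_(S : {set 'I_n}) \sum_(pi in SJ J) fhat f (pi @: S) ^+ 2 = #|SJ J|%:R.
  rewrite exchange_big /=.
  under eq_bigr => pi _ do rewrite (eq_bigr _ (fun S _ => expr2 _)) pairS.
  under eq_bigr => pi _ do (under eq_bigr do rewrite ff; rewrite cc mulfK //).
  by rewrite sumr_const -[_ *+ _]mulr_natl mulr1.
have Q2 : \sum_(S : {set 'I_n}) (\sum_(pi in SJ J) fhat f (pi @: S)) ^+ 2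
        = #|SJ J|%:R * (\sum_(t in SJ J) Af t) / (2 ^ n)%:R.
  under eq_bigr do rewrite expr2 big_distrlr.
  rewrite exchange_big /=; under eq_bigr do rewrite exchange_big /=.
  under eq_bigr => pi piJ do under eq_bigr => sg _ do rewrite pairS Gshift.
  under eq_bigr => pi piJ do rewrite -mulr_suml (sum_SJ_shift _ _ _ Af _ piJ).
  by rewrite sumr_const -[_ *+ _]mulr_natl mulrA.
under eq_bigr do rewrite varpiE //.
rewrite sumrB -!mulr_suml Q1 Q2 L.
field; by rewrite N0 M0.
Qed.
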